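(* Let $0\le k\le n$. The number $F(k,n)$ of preference profiles for $n$ men and $n$ women having exactly $k$ pairs of soulmates is \[F(k,n)=\binom{n}{k}^2 k!\,(n-1)!^{2k}\left(\sum_{i=0}^{n-k} (-1)^{i}\binom{n-k}{i}^2 (n-1)!^{2i}\, i!\, n!^{2n-2k-2i}\right).\]
   Context: A preference profile for $n$ (labeled) men and $n$ (labeled) women consists of, for each man, a strict ranking of the women (bijection to $\{1,\dots,n\}$, 1 = favorite), and for each woman, a strict ranking of the men. A man and a woman are soulmates if each ranks the other first; the number of pairs of soulmates of a profile is the number of such man–woman pairs. *)

(* Defs.v *)
From mathcomp Require Import all_boot all_algebra all_fingroup.
Set Implicit Arguments. Unset Strict Implicit. Unset Printing Implicit Defensive.

(* A ranking of n items is a bijection 'I_n -> 'I_n (item |-> rank), where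
   rank 0 (i.e. 1 in the paper's 1-based convention) is the favorite. *)
Definition ranking (n : nat) := {perm 'I_n}.

Definition profile (n : nat) := ({ffun 'I_n -> {perm 'I_n}} * {ffun 'I_n -> {perm 'I_n}})%type.

Definition men_pref n (P : profile n) := P.1.
Definition women_pref n (P : profile n) := P.2.

Definition soulmates n (P : profile n) (m w : 'I_n) : bool :=
  (nat_of_ord (men_pref P m w) == 0) && (nat_of_ord (women_pref P w m) == 0).

Definition num_soulmates n (P : profile n) : nat :=
  #|[set mw : 'I_n * 'I_n | soulmates P mw.1 mw.2]|.

Definition F (k n : nat) : nat := #|[set P : profile n | num_soulmates P == k]|.

(* Main.v *)
Require Import Defs.
From mathcomp Require Import all_boot all_algebra all_fingroup.
From mathcomp Require Import zify ring.
Set Implicit Arguments. Unset Strict Implicit. Unset Printing Implicit Defensive.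

Lemma sum_eq1 (T : finType) (a : T) : \sum_(y : T) (a == y : nat) = 1.
Proof.
rewrite (bigD1 a) //= eqxx big1 ?addn0 // => y /negbTE; rewrite eq_sym => ->.
by [].
Qed.

Lemma perm_at_shift n (x y y' : 'I_n) :
  \sum_(s : {perm 'I_n}) (s x == y : nat) = \sum_(s : {perm 'I_n}) (s x == y' : nat).
Proof.
rewrite (reindex_inj (mulIg (tperm y y'))) /=.
apply: eq_bigr => s _; rewrite permM.
have -> : (tperm y y' (s x) == y) = (tperm y y' (s x) == tperm y y' y') by rewrite tpermR.
by rewrite (inj_eq perm_inj).
Qed.

Lemma perm_at n (x y : 'I_n) :
  \sum_(s : {perm 'I_n}) (s x == y : nat) = n.-1`!.
Proof.
have H : \sum_(y' : 'I_n) \sum_(s : {perm 'I_n}) (s x == y' : nat) = n`!.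
  rewrite exchange_big /=.
  under eq_bigr => s _ do rewrite sum_eq1.
  rewrite sum1_card.
  have -> : #|[pred _ : {perm 'I_n} | true]| = #|[set: {perm 'I_n}]| by rewrite cardsT.
  have := card_perm [set: 'I_n]; rewrite cardsT card_ord => <-.
  apply: eq_card => s; rewrite !inE; apply/esym/subsetP => z _; by rewrite inE.
move: H; under eq_bigr => y' _ do rewrite (perm_at_shift x y' y).
rewrite sum_nat_const card_ord.
case: n x y => [[]//|n] x y /=.
rewrite factS => /eqP; rewrite eqn_pmul2l // => /eqP.
by [].
Qed.

Lemma perm_at0 n (x : 'I_n) :
  \sum_(s : {perm 'I_n}) (nat_of_ord (s x) == 0 : nat) = n.-1`!.
Proof.
pose y0 : 'I_n := Ordinal (leq_ltn_trans (leq0n x) (ltn_ord x)).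
rewrite -(perm_at x y0); apply: eq_bigr => s _.
by congr nat_of_bool; apply/eqP/eqP => [h|->] //; apply: val_inj.
Qed.

Definition G n j (a b : {ffun 'I_j -> 'I_n}) :=
  \sum_(Q : {ffun 'I_n -> {perm 'I_n}}) \prod_(i < j) (nat_of_ord (Q (a i) (b i)) == 0 : nat).

Lemma G_fact n j (a b : {ffun 'I_j -> 'I_n}) :
  G a b = \prod_(m : 'I_n) \sum_(s : {perm 'I_n}) \prod_(i | a i == m) (nat_of_ord (s (b i)) == 0 : nat).
Proof.
rewrite /G bigA_distr_bigA /=; apply: eq_bigr => Q _.
rewrite (partition_big a xpredT) //=; apply: eq_bigr => m _.
by apply: eq_bigr => i /eqP ->.
Qed.

Lemma card_perms n : \sum_(s : {perm 'I_n}) 1 = n`!.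
Proof.
rewrite sum1_card.
have -> : #|[pred _ : {perm 'I_n} | true]| = #|[set: {perm 'I_n}]| by rewrite cardsT.
have := card_perm [set: 'I_n]; rewrite cardsT card_ord => <-.
apply: eq_card => s; rewrite !inE; apply/esym/subsetP => z _; by rewrite inE.
Qed.

Lemma G_inj n j (a b : {ffun 'I_j -> 'I_n}) : injective a ->
  G a b = n.-1`! ^ j * n`! ^ (n - j).
Proof.
move=> ia; rewrite G_fact.
rewrite (eq_bigr (fun m => if m \in codom a then n.-1`! else n`!)); last first.
  move=> m _; case: ifP => [/codomP [i0 ->]|hm].
    rewrite -(perm_at0 (b i0)); apply: eq_bigr => s _.
    by rewrite (big_pred1 i0) // => i /=; rewrite (inj_eq ia).
  rewrite -card_perms; apply: eq_bigr => s _.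
  by rewrite big_pred0 // => i /=; apply/negbTE/eqP => hi; move: hm; rewrite -hi codom_f.
rewrite (bigID (fun m => m \in codom a)) /=.
rewrite (eq_bigr (fun _ => n.-1`!)); last by move=> m ->.
rewrite [X in _ * X](eq_bigr (fun _ => n`!)); last by move=> m /negbTE ->.
rewrite !prod_nat_const.
have cj : #|codom a| = j by rewrite card_codom // card_ord.
have := cardC (mem (codom a)); rewrite card_ord.
set u := #|[predC _]|.
have -> : #|[pred x | x \in codom a]| = j by rewrite -[RHS]cj; apply: eq_card.
by move=> <-; rewrite addKn.
Qed.

Lemma G_noninj n j (a b : {ffun 'I_j -> 'I_n}) : injective b -> ~~ injectiveb a ->
  G a b = 0.
Proof.
move=> ib /injectivePn [i1 [i2 ne12 e12]].
rewrite G_fact (bigD1 (a i1)) //=.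
rewrite big1 ?mul0n // => s _.
rewrite (bigD1 i1) //= (bigD1 i2) /=; last by rewrite -e12 eqxx eq_sym ne12.
case h1: (nat_of_ord (s (b i1)) == 0); last by rewrite mul0n.
case h2: (nat_of_ord (s (b i2)) == 0); last by rewrite mul0n muln0.
exfalso; move/negP: ne12; apply; apply/eqP; apply: ib; apply: (@perm_inj _ s).
by apply: val_inj; rewrite /= (eqP h1) (eqP h2).
Qed.

Lemma card_sum (T : finType) (p : pred T) : #|[set x | p x]| = \sum_x (p x : nat).
Proof.
rewrite -sum1_card big_mkcond; apply: eq_bigr => x _; rewrite !inE; by case: (p x).
Qed.

Lemma prod_bool (T : finType) (p : pred T) : \prod_x (p x : nat) = [forall x, p x].
Proof.
case: forallP => [h|/forallP]; first by rewrite big1 // => x _; rewrite h.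
rewrite negb_forall => /existsP [x /negbTE hx].
by rewrite (bigD1 x) //= hx.
Qed.

Lemma soul_unique n (P : profile n) m w w' :
  soulmates P m w -> soulmates P m w' -> w = w'.
Proof.
move=> /andP [h1 _] /andP [h2 _]; apply: (@perm_inj _ (men_pref P m)).
by apply: val_inj; rewrite /= (eqP h1) (eqP h2).
Qed.

Lemma soul_sum n (P : profile n) m :
  \sum_w (soulmates P m w : nat) = [exists w, soulmates P m w].
Proof.
case: existsP => [[w hw]|hn]; last first.
  rewrite big1 // => w _; case h: (soulmates P m w) => //; exfalso; apply: hn; by exists w.
rewrite (bigD1 w) //= hw big1 // => w' /negbTE hw'.
case h: (soulmates P m w') => //; by rewrite (soul_unique h hw) eqxx in hw'.
Qed.

Lemma numS n (P : profile n) :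
  num_soulmates P = #|[set m | [exists w, soulmates P m w]]|.
Proof.
rewrite /num_soulmates.
have e : \sum_m \sum_w (soulmates P m w : nat) = \sum_(p : 'I_n * 'I_n) (soulmates P p.1 p.2 : nat) by exact: pair_bigA.
rewrite (card_sum (fun mw : 'I_n * 'I_n => soulmates P mw.1 mw.2)) -e card_sum. by rewrite (eq_bigr _ (fun m _ => soul_sum P m)).
Qed.

Lemma num_le n (P : profile n) : num_soulmates P <= n.
Proof. by rewrite numS -[X in _ <= X]card_ord max_card. Qed.

Lemma ffact_num n j (P : profile n) :
  (num_soulmates P) ^_ j = \sum_(f : {ffun 'I_j -> 'I_n} | injectiveb f)
      \prod_i \sum_w (soulmates P (f i) w : nat).
Proof.
rewrite numS; set R := [set m | _].
rewrite -{1}(card_ord j) -card_inj_ffuns_on card_sum [RHS]big_mkcond /=.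
apply: eq_bigr => f _.
under eq_bigr => i _ do rewrite soul_sum.
rewrite (prod_bool (fun i => [exists w, soulmates P (f i) w])).
case: (injectiveb f); last by rewrite andbF.
rewrite andbT; congr nat_of_bool.
apply/ffun_onP/forallP => h x; move: (h x); by rewrite inE.
Qed.

Lemma andb_nat (x y : bool) : ((x && y) : nat) = x * y.
Proof. by case: x; case: y. Qed.

Lemma profile_sum n j (a b : {ffun 'I_j -> 'I_n}) :
  \sum_(P : profile n) \prod_i (soulmates P (a i) (b i) : nat) = G a b * G b a.
Proof.
have e : \sum_(Q1 : {ffun 'I_n -> {perm 'I_n}}) \sum_(Q2 : {ffun 'I_n -> {perm 'I_n}})
    \prod_i (soulmates ((Q1, Q2) : profile n) (a i) (b i) : nat) =
  \sum_(P : profile n) \prod_i (soulmates P (a i) (b i) : nat).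
  exact: (pair_bigA _ (fun Q1 Q2 => \prod_i (soulmates ((Q1, Q2) : profile n) (a i) (b i) : nat))).
rewrite -e /G big_distrl /=; apply: eq_bigr => Q1 _.
rewrite big_distrr /=; apply: eq_bigr => Q2 _.
rewrite -big_split /=; apply: eq_bigr => i _.
by rewrite /soulmates andb_nat.
Qed.

Lemma inj_count n j : \sum_(f : {ffun 'I_j -> 'I_n}) (injectiveb f : nat) = n ^_ j.
Proof.
by rewrite -card_sum card_inj_ffuns !card_ord.
Qed.

Lemma GG n j (a : {ffun 'I_j -> 'I_n}) : injective a ->
  \sum_b G a b * G b a = n ^_ j * (n.-1`! ^ j * n`! ^ (n - j)) ^ 2.
Proof.
move=> ia.
rewrite (eq_bigr (fun b : {ffun 'I_j -> 'I_n} => (n.-1`! ^ j * n`! ^ (n - j)) ^ 2 * (injectiveb b : nat))).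
  by rewrite -big_distrr /= inj_count mulnC.
move=> b _; rewrite (G_inj b ia).
case: (boolP (injectiveb b)) => [/injectiveP ib|nb].
  by rewrite (G_inj a ib) muln1.
by rewrite (G_noninj ia nb) /= !muln0.
Qed.

Lemma Bj n j : \sum_(P : profile n) (num_soulmates P) ^_ j
   = (n ^_ j) ^ 2 * (n.-1`! ^ j * n`! ^ (n - j)) ^ 2.
Proof.
under eq_bigr => P _ do rewrite ffact_num.
rewrite exchange_big /=.
rewrite (eq_bigr (fun _ => n ^_ j * (n.-1`! ^ j * n`! ^ (n - j)) ^ 2)).
  rewrite sum_nat_const.
  have -> : #|[pred f : {ffun 'I_j -> 'I_n} | injectiveb f]| = n ^_ j.
    by rewrite -(inj_count n j) -card_sum; apply: eq_card => f; rewrite !inE.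
  by rewrite mulnA [(n ^_ j) ^ 2]expnS expn1.
move=> f /injectiveP inf.
under eq_bigr => P _ do rewrite bigA_distr_bigA.
rewrite exchange_big /= -(GG inf); apply: eq_bigr => b _.
exact: profile_sum.
Qed.

Lemma Sj n j : \sum_(P : profile n) 'C(num_soulmates P, j)
   = 'C(n, j) ^ 2 * j`! * (n.-1`! ^ j * n`! ^ (n - j)) ^ 2.
Proof.
apply/eqP; rewrite -(eqn_pmul2l (fact_gt0 j)); apply/eqP.
rewrite big_distrr /=.
under eq_bigr => P _ do rewrite mulnC bin_ffact.
rewrite Bj -bin_ffact; ring.
Qed.

Lemma binmul c j k : k <= j -> j <= c ->
  'C(c, j) * 'C(j, k) = 'C(c, k) * 'C(c - k, j - k).
Proof.
move=> hkj hjc.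
have pos : 0 < k`! * (j - k)`! * (c - j)`! by rewrite !muln_gt0 !fact_gt0.
apply/eqP; rewrite -(eqn_pmul2r pos); apply/eqP.
transitivity c`!.
  rewrite -(bin_fact hjc) -(bin_fact hkj); ring.
have e : c - k - (j - k) = c - j by lia.
have h1 : k <= c by lia.
have h2 : j - k <= c - k by lia.
rewrite -(bin_fact h1) -(bin_fact h2) e; ring.
Qed.

Lemma binid n k i : i + k <= n ->
  'C(i + k, k) * 'C(n, i + k) ^ 2 * (i + k)`! = 'C(n, k) ^ 2 * k`! * 'C(n - k, i) ^ 2 * i`!.
Proof.
move=> h.
have e1 : 'C(n, i + k) * 'C(i + k, k) = 'C(n, k) * 'C(n - k, i).
  by rewrite binmul ?addnK //; lia.
have e2 : 'C(n, i + k) * (i + k)`! = 'C(n, k) * k`! * ('C(n - k, i) * i`!).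
  apply/eqP; rewrite -(eqn_pmul2r (fact_gt0 (n - (i + k)))); apply/eqP.
  rewrite -mulnA (bin_fact h).
  have e : n - k - i = n - (i + k) by lia.
  have h2 : i <= n - k by lia.
  have h1 : k <= n by lia.
  rewrite -(bin_fact h1) -(bin_fact h2) e; ring.
transitivity (('C(n, i + k) * 'C(i + k, k)) * ('C(n, i + k) * (i + k)`!)); first ring.
rewrite e1 e2; ring.
Qed.
Import GRing.Theory.
Local Open Scope ring_scope.

Lemma altsum m : \sum_(i < m.+1) (-1) ^+ i * ('C(m, i))%:Z = (m == 0)%N%:Z.
Proof.
rewrite -natz; have := exprD1n (-1 : int) m; rewrite addNr expr0n => ->.
by apply: eq_bigr => i _; rewrite -mulr_natr natz.
Qed.

Lemma inv (c k N : nat) : (c <= N)%N ->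
  \sum_(j < N.+1) (-1) ^+ (j - k) * ('C(j, k) * 'C(c, j))%N%:Z = (c == k)%N%:Z.
Proof.
move=> hcN.
case: (ltnP c k) => hck.
  rewrite (ltn_eqF hck) big1 // => j _.
  case: (leqP j c) => hj.
    by rewrite bin_small ?mul0n ?mulr0 //; apply: leq_ltn_trans hck.
  by rewrite (bin_small hj) muln0 mulr0.
rewrite -(big_mkord xpredT (fun j => (-1) ^+ (j - k) * ('C(j, k) * 'C(c, j))%N%:Z)).
rewrite (big_cat_nat (n := k)) /=; [|lia|lia].
rewrite big_nat_cond big1 ?add0r; last first.
  by move=> j /andP [/andP [_ hj] _]; rewrite bin_small ?mul0n ?mulr0.
rewrite (big_cat_nat (n := c.+1)) /=; [|lia|lia].
rewrite [X in _ + X]big_nat_cond [X in _ + X]big1 ?addr0; last first.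
  by move=> j /andP [/andP [hj _] _]; rewrite (bin_small hj) muln0 mulr0.
rewrite -{1}[k]add0n big_addn.
rewrite (eq_big_nat _ _ (F2 := fun i => 'C(c, k)%:Z * ((-1) ^+ i * ('C(c - k, i))%:Z))); last first.
  move=> i hi; rewrite addnK mulnC binmul ?addnK; [|lia|lia].
  rewrite PoszM; ring.
rewrite -mulr_sumr big_mkord subSn // altsum.
case: (eqVneq c k) => [->|ne]; first by rewrite subnn binn.
have -> : (c - k == 0)%N = false by lia.
by rewrite mulr0.
Qed.

Theorem mainTheorem3 (k n : nat) (hk : (k <= n)%N) :
  (F k n)%:Z =
    ('C(n, k) ^ 2 * k`! * (n.-1)`! ^ (2 * k))%N%:Z *
    \sum_(i < (n - k).+1)
      (-1) ^+ i * ('C(n - k, i) ^ 2 * (n.-1)`! ^ (2 * i) * i`!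
                   * n`! ^ (2 * n - 2 * k - 2 * i))%N%:Z.
Proof.
transitivity (\sum_(j < n.+1) (-1) ^+ (j - k) *
   ('C(j, k) * ('C(n, j) ^ 2 * j`! * (n.-1`! ^ j * n`! ^ (n - j)) ^ 2))%N%:Z).
  rewrite /F card_sum -natz natr_sum.
  rewrite (eq_bigr (fun P : profile n => \sum_(j < n.+1) (-1) ^+ (j - k) *
       ('C(j, k) * 'C(num_soulmates P, j))%N%:Z)); last first.
    by move=> P _; rewrite natz (inv _ (num_le P)).
  rewrite exchange_big /=; apply: eq_bigr => j _.
  rewrite -Sj big_distrr /= -mulr_sumr; congr (_ * _).
  rewrite -natz natr_sum; apply: eq_bigr => P _; by rewrite natz.
rewrite -(big_mkord xpredT (fun j => (-1) ^+ (j - k) *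
   ('C(j, k) * ('C(n, j) ^ 2 * j`! * (n.-1`! ^ j * n`! ^ (n - j)) ^ 2))%N%:Z)).
rewrite (big_cat_nat (n := k)) /=; [|lia|lia].
rewrite big_nat_cond big1 ?add0r; last first.
  by move=> j /andP [/andP [_ hj] _]; rewrite bin_small ?mul0n ?mulr0.
rewrite -{1}[k]add0n big_addn subSn // big_mkord.
rewrite mulr_sumr; apply: eq_bigr => i _.
have hi : (i <= n - k)%N by rewrite -ltnS.
rewrite addnK.
have p1 : ((n.-1`! ^ (i + k)) ^ 2 = (n.-1)`! ^ (2 * k) * (n.-1)`! ^ (2 * i))%N.
  by rewrite -expnM -expnD; f_equal; lia.
have p2 : ((n`! ^ (n - (i + k))) ^ 2 = n`! ^ (2 * n - 2 * k - 2 * i))%N.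
  by rewrite -expnM; f_equal; lia.
have h : ('C(i + k, k) * ('C(n, i + k) ^ 2 * (i + k)`! * ((n.-1)`! ^ (i + k) * n`! ^ (n - (i + k))) ^ 2)
   = ('C(n, k) ^ 2 * k`! * (n.-1)`! ^ (2 * k)) * ('C(n - k, i) ^ 2 * (n.-1)`! ^ (2 * i) * i`!
                   * n`! ^ (2 * n - 2 * k - 2 * i)))%N.
  rewrite expnMn p1 p2.
  transitivity (('C(i + k, k) * 'C(n, i + k) ^ 2 * (i + k)`!) *
     ((n.-1)`! ^ (2 * k) * (n.-1)`! ^ (2 * i) * n`! ^ (2 * n - 2 * k - 2 * i)))%N; first ring.
  rewrite binid; [ring|lia].
rewrite h PoszM; ring.
Qed.
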